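(* Let $\nu_n(x_0,x_1)$ ($n\ge 0$) be any nonvanishing functions and $\bar P_n(x;x_0,x_1)=\nu_n(x_0,x_1)P_n(x;x_0,x_1)$. Then for all $n\ge1$: $$\mathcal{A}_6\bar P_n=\frac{1}{(1-x_0^2)(1-x_1^2)}\Bigg\{\frac{\nu_n(q^{-\frac12}x_0,q^{-\frac12}x_1)}{\nu_{n+1}(x_0,x_1)}q^{-n-\frac52}\left(x_0^2x_1^2-q^{n+2}\right)^2\bar P_{n+1}$$ $$-q^{-n-\frac32}\left(\frac{\nu_n(q^{\frac12}x_0,q^{-\frac12}x_1)}{\nu_n(x_0,x_1)}(x_1^2-q^{n+1})^2+\frac{\nu_n(q^{-\frac12}x_0,q^{\frac12}x_1)}{\nu_n(x_0,x_1)}(x_0^2-q^{n+1})^2\right)\bar P_n+\frac{\nu_n(q^{\frac12}x_0,q^{\frac12}x_1)}{\nu_{n-1}(x_0,x_1)}q^{-n-\frac12}(1-q^n)^2\bar P_{n-1}\Bigg\},$$ where on the right-hand side $\bar P_m=\bar P_m(x;x_0,x_1)$.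
   Context: Let $q$ be a complex parameter with $0<|q|<1$, with a fixed choice of $q^{1/4}$ and $q^{k/4}:=(q^{1/4})^k$; $x,x_0,x_1$ are variables. Notation: $(y)_n=(y;q)_n=\prod_{i=1}^{n}(1-yq^{i-1})$, $(y_1,\dots,y_k)_n=(y_1)_n\cdots(y_k)_n$. Operators on functions $f(x,x_0,x_1)$: $\eth f(x,x_0,x_1)=f(q^{1/2}x,x_0,x_1)$, $\eth_0 f(x,x_0,x_1)=f(x,q^{1/2}x_0,x_1)$, $\eth_1 f(x,x_0,x_1)=f(x,x_0,q^{1/2}x_1)$, with powers and inverses defined accordingly; a function written to the left of an operator acts by multiplication after the operator is applied, and products of operators denote composition. For $n\ge0$, $$P_n(x;x_0,x_1)=(-1)^nq^{-\frac n2}\frac{\left(q,\frac{q}{x_0^2},\frac{q}{x_1^2}\right)_n}{\left(\frac{q^{n+1}}{x_0^2x_1^2}\right)_n}\sum_{k=0}^{n}q^k\frac{\left(q^{-n},\frac{q^{n+1}}{x_0^2x_1^2}\right)_k}{\left(q,q,\frac{q}{x_0^2},\frac{q}{x_1^2}\right)_k}\left(-q^{\frac12}x,-q^{\frac12}x^{-1}\right)_k$$ (the Askey–Wilson polynomial with parameters $(a,b,c,d)=(-q^{1/2},-q^{1/2},-q^{1/2}/x_0^2,-q^{1/2}/x_1^2)$). Let $\omega(x)=\frac{x(1+q^{1/2}x)}{q^{1/2}(1-x^2)(1-q^{1/2}x)}$ and, for $b\in\{0,1\}$, $$K_0(x_b;x)=-\frac{1}{1-x_b^2}\eth_b+\frac{(q^{\frac12}x+x_b^2)(q^{\frac32}x+x_b^2)}{q\,x(1-x_b^2)}\eth_b^{-1},\qquad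 G_0(x_b;x)=-\frac{1}{1-x_b^2}\eth_b+\frac{(q^{\frac12}x+x_b^2)(q^{\frac12}+x\,x_b^2)}{q^{\frac12}x(1-x_b^2)}\eth_b^{-1}.$$ Define (image of the curve $\mathbb{k}_6$ of the genus-two skein algebra) $$\mathcal{A}_6=\sum_{\epsilon=\pm1}\omega(x^\epsilon)\left\{K_0(x_0;x^\epsilon)\,K_0(x_1;x^\epsilon)\,\eth^{2\epsilon}-G_0(x_0;x)\,G_0(x_1;x)\right\}.$$ *)

(* Defs.v *)
From HB Require Import structures.
From mathcomp Require Import all_boot all_order all_algebra.
From mathcomp Require Export complex.
Set Implicit Arguments. Unset Strict Implicit. Unset Printing Implicit Defensive.
Import Order.TTheory GRing.Theory Num.Theory.
Local Open Scope ring_scope.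

(* Functions of (x, x0, x1) over a field F.  The parameter r stands for the
   fixed choice of q^(1/4); hence q = r^4 and q^(k/4) = r^k. *)
Definition fn (F : fieldType) := F -> F -> F -> F.

Section Defs.
Variable F : fieldType.
Variable r : F.
Local Notation q := (r ^+ 4).

Definition poch (y : F) (n : nat) : F := \prod_(i < n) (1 - y * q ^+ i).

(* Shift operator  eth^a eth_0^b eth_1^c : f(x,x0,x1) |-> f(q^(a/2) x, q^(b/2) x0, q^(c/2) x1) *)
Definition sh (a b c : int) (f : fn F) : fn F :=
  fun x x0 x1 => f (r ^ (2 * a) * x) (r ^ (2 * b) * x0) (r ^ (2 * c) * x1).

Definition shb (b : bool) (a : int) (f : fn F) : fn F :=
  if b then sh 0 0 a f else sh 0 a 0 f.

Definition K0 (b : bool) (e : int) (f : fn F) : fn F :=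
  fun x x0 x1 =>
    let xb := if b then x1 else x0 in
    let y := x ^ e in
    - (1 - xb ^+ 2)^-1 * shb b 1 f x x0 x1
    + ((r ^+ 2 * y + xb ^+ 2) * (r ^+ 6 * y + xb ^+ 2) / (q * y * (1 - xb ^+ 2)))
      * shb b (-1) f x x0 x1.

Definition G0 (b : bool) (f : fn F) : fn F :=
  fun x x0 x1 =>
    let xb := if b then x1 else x0 in
    - (1 - xb ^+ 2)^-1 * shb b 1 f x x0 x1
    + ((r ^+ 2 * x + xb ^+ 2) * (r ^+ 2 + x * xb ^+ 2) / (r ^+ 2 * x * (1 - xb ^+ 2)))
      * shb b (-1) f x x0 x1.

Definition omega (y : F) : F :=
  y * (1 + r ^+ 2 * y) / (r ^+ 2 * (1 - y ^+ 2) * (1 - r ^+ 2 * y)).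

Definition A6 (f : fn F) : fn F :=
  fun x x0 x1 =>
    \sum_(e <- [:: 1%Z; (-1)%Z])
      omega (x ^ e) *
        (K0 false e (K0 true e (sh (2 * e) 0 0 f)) x x0 x1
         - G0 false (G0 true f) x x0 x1).

Definition P (n : nat) : fn F :=
  fun x x0 x1 =>
    (-1) ^+ n * r ^- (2 * n)
    * (poch q n * poch (q / x0 ^+ 2) n * poch (q / x1 ^+ 2) n)
      / poch (q ^+ n.+1 / (x0 ^+ 2 * x1 ^+ 2)) n
    * \sum_(k < n.+1)
        q ^+ k * (poch (q ^- n) k * poch (q ^+ n.+1 / (x0 ^+ 2 * x1 ^+ 2)) k)
        / (poch q k * poch q k * poch (q / x0 ^+ 2) k * poch (q / x1 ^+ 2) k)
        * (poch (- (r ^+ 2 * x)) k * poch (- (r ^+ 2 / x)) k).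

Definition Pbar (nu : nat -> F -> F -> F) (n : nat) : fn F :=
  fun x x0 x1 => nu n x0 x1 * P n x x0 x1.

End Defs.

(* Main.v *)
Require Import Defs.
From HB Require Import structures.
From mathcomp Require Import all_boot all_order all_algebra complex.
From mathcomp Require Import ring zify.
Import Order.TTheory GRing.Theory Num.Theory.
Local Open Scope ring_scope.
Set Implicit Arguments. Unset Strict Implicit.

Section Basic.
Variable F : fieldType.
Variable r : F.
Local Notation q := (r ^+ 4).
Local Notation poch := (poch r).

Lemma poch0 y : poch y 0 = 1.
Proof. by rewrite /poch big_ord0. Qed.

Lemma pochS y n : poch y n.+1 = poch y n * (1 - y * q ^+ n).
Proof. by rewrite /poch big_ord_recr. Qed.

Lemma pochSl y n : poch y n.+1 = (1 - y) * poch (y * q) n.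
Proof.
rewrite /poch big_ord_recl /= expr0 mulr1; congr (_ * _).
apply: eq_bigr => i _; rewrite /= /bump /= add1n exprS; ring.
Qed.

Lemma poch1 y : poch y 1 = 1 - y.
Proof. by rewrite pochS poch0 expr0 mulr1 mul1r. Qed.

Lemma pochE y z n : y = z -> poch y n = poch z n.
Proof. by move->. Qed.

Lemma pochL1 y z i : y * q = z -> poch y i.+1 = (1 - y) * poch z i.
Proof. by move=> <-; rewrite pochSl. Qed.
Lemma pochL2 y z i : y * q = z -> poch y i.+2 = (1 - y) * poch z i * (1 - z * q ^+ i).
Proof. by move=> <-; rewrite pochSl pochS; ring. Qed.
Lemma pochL3 y z i : y * q = z ->
  poch y i.+3 = (1 - y) * poch z i * (1 - z * q ^+ i) * (1 - z * q ^+ i.+1).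
Proof. by move=> <-; rewrite pochSl !pochS; ring. Qed.
Lemma pochR2 y z i : y = z -> poch y i.+2 = poch z i * (1 - z * q ^+ i) * (1 - z * q ^+ i.+1).
Proof. by move=> <-; rewrite !pochS; ring. Qed.
Lemma pochR1 y z i : y = z -> poch y i.+1 = poch z i * (1 - z * q ^+ i).
Proof. by move=> <-; rewrite !pochS. Qed.
Lemma pochM2 y z i : y * q ^+ 2 = z -> poch y i.+2 = (1 - y) * (1 - y * q) * poch z i.
Proof. move=> <-; rewrite !pochSl; rewrite -mulrA expr2 mulrA; ring. Qed.

End Basic.

Ltac side := repeat (apply/andP; split); try assumption;
  repeat first [assumption | apply: mulf_neq0 | apply: expf_neq0].

Section PerK.
Variable F : fieldType.
Variable r : F.
Local Notation q := (r ^+ 4).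
Local Notation poch := (poch r).

Definition phi k (x : F) := poch (-(r^+2 * x)) k * poch (-(r^+2 / x)) k.
Definition kc (e : bool) (A y : F) : F :=
  if e then - (1 - A)^-1 else (r ^+ 2 * y + A) * (r ^+ 6 * y + A) / (r ^+ 4 * y * (1 - A)).
Definition gc (e : bool) (A x : F) : F :=
  if e then - (1 - A)^-1 else (r ^+ 2 * x + A) * (r ^+ 2 + x * A) / (r ^+ 2 * x * (1 - A)).
Definition Lop (e0 e1 : bool) (g : F -> F) (x A B : F) : F :=
  omega r x * kc e0 A x * kc e1 B x * g (r ^+ 4 * x)
  + omega r x^-1 * kc e0 A x^-1 * kc e1 B x^-1 * g ((r ^+ 4)^-1 * x)
  - (omega r x + omega r x^-1) * gc e0 A x * gc e1 B x * g x.

Definition alc (e0 e1 : bool) (A B : F) k : F :=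
  let Q := q ^+ k in let d := (1 - A) * (1 - B) in
  match e0, e1 with
  | true, true => (1 - Q) ^+ 2 / (q * d)
  | true, false => (1 - Q) ^+ 2 * (q * Q - B) * (Q - B) / (Q * r ^+ 6 * d)
  | false, true => (1 - Q) ^+ 2 * (q * Q - A) * (Q - A) / (Q * r ^+ 6 * d)
  | false, false => (1 - Q) ^+ 2 * (Q - A) * (Q - B) * (q * Q - A) * (q * Q - B) / (Q ^+ 2 * r ^+ 8 * d)
  end.
Definition bec (e0 e1 : bool) (A B : F) k : F :=
  let Q := q ^+ k in let d := (1 - A) * (1 - B) in
  match e0, e1 with
  | true, true => 0
  | true, false => - (B - q * Q) ^+ 2 / (Q * r ^+ 6 * d)
  | false, true => - (A - q * Q) ^+ 2 / (Q * r ^+ 6 * d)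
  | false, false =>
     ( - A^+2 * B^+2 * (1 + q)
       + Q * (q * (A * B^+2 + A^+2 * B + 2 * A^+2 * B^+2) + q^+2 * (2 * A * B + A * B^+2 + A^+2 * B))
       - Q^+2 * (2 * q^+2 * (A * B + A * B^+2 + A^+2 * B) + 2 * q^+3 * (B + A + A * B))
       + Q^+3 * (q^+3 * (B + A + 2 * A * B) + q^+4 * (2 + B + A))
       - Q^+4 * q^+4 * (1 + q)) / (Q ^+ 2 * q ^+ 3 * d)
  end.
Definition gac (e0 e1 : bool) (A B : F) k : F :=
  let Q := q ^+ k in let d := (1 - A) * (1 - B) in
  match e0, e1 with
  | false, false => (A * B - q ^+ 2 * Q) ^+ 2 / (Q ^+ 2 * r ^+ 12 * d)
  | _, _ => 0
  end.

Lemma phi0 x : phi 0 x = 1.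
Proof. by rewrite /phi !poch0 mulr1. Qed.

Lemma perk e0 e1 k (x A B : F) (hr : r != 0) (hx : x != 0) (hx2 : 1 - x ^+ 2 != 0)
  (hx3 : 1 - r^+2 * x != 0) (hx4 : x - r ^+ 2 != 0) (hA : 1 - A != 0) (hB : 1 - B != 0) :
  Lop e0 e1 (phi k) x A B =
  alc e0 e1 A B k * phi k.-1 x + bec e0 e1 A B k * phi k x + gac e0 e1 A B k * phi k.+1 x.
Proof.
have hxi2 : 1 - x^-1 ^+ 2 != 0.
  have -> : 1 - x^-1 ^+ 2 = - (1 - x ^+ 2) / x ^+ 2 by field.
  by rewrite mulf_neq0 ?oppr_eq0 // invr_eq0 expf_neq0.
have hxi3 : 1 - r^+2 * x^-1 != 0.
  have -> : 1 - r^+2 * x^-1 = (x - r ^+ 2) / x by field.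
  by rewrite mulf_neq0 // invr_eq0.
have hq : r ^+ 4 != 0 by rewrite expf_neq0.
have hx2' : x ^+ 2 - 1 != 0 by rewrite -opprB oppr_eq0.
have hA' : A - 1 != 0 by rewrite -opprB oppr_eq0.
have hB' : B - 1 != 0 by rewrite -opprB oppr_eq0.
case: k => [|[|i]].
- rewrite /Lop /alc /bec /gac /phi /omega /= !pochS !poch0 !expr0 !mulr1 !mul1r.
  case: e0; case: e1; rewrite /kc /gc /=; field; side.
- rewrite /Lop /alc /bec /gac /phi /omega /= !pochS !poch0 !expr0 !mulr1 !mul1r.
  case: e0; case: e1; rewrite /kc /gc /=; field; side.
- set X0 := -(r^+6 * x); set Y0 := -(r^+6 / x).
  rewrite /Lop /alc /bec /gac /phi /omega /=.
  rewrite (@pochR2 _ _ (-(r^+2*(r^+4*x))) X0 i); last by rewrite /X0; ring.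
  rewrite (@pochM2 _ _ (-(r^+2/(r^+4*x))) Y0 i); last by rewrite /Y0; field; side.
  rewrite (@pochM2 _ _ (-(r^+2*((r^+4)^-1*x))) X0 i); last by rewrite /X0; field; side.
  rewrite (@pochR2 _ _ (-(r^+2/((r^+4)^-1*x))) Y0 i); last by rewrite /Y0; field; side.
  rewrite (@pochL3 _ _ (-(r^+2*x)) X0 i); last by rewrite /X0; ring.
  rewrite (@pochL3 _ _ (-(r^+2/x)) Y0 i); last by rewrite /Y0; field; side.
  rewrite (@pochL2 _ _ (-(r^+2*x)) X0 i); last by rewrite /X0; ring.
  rewrite (@pochL2 _ _ (-(r^+2/x)) Y0 i); last by rewrite /Y0; field; side.
  rewrite (@pochL1 _ _ (-(r^+2*x)) X0 i); last by rewrite /X0; ring.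
  rewrite (@pochL1 _ _ (-(r^+2/x)) Y0 i); last by rewrite /Y0; field; side.
  rewrite /X0 /Y0 !exprS.
  have hQ : (r ^+ 4) ^+ i != 0 by rewrite !expf_neq0.
  case: e0; case: e1; rewrite /kc /gc /=; field; side.
Qed.
End PerK.

Section Coef.
Variable F : fieldType.
Variable r : F.
Local Notation q := (r ^+ 4).
Local Notation poch := (poch r).

Definition cf n (A B : F) k : F :=
  q ^+ k * (poch (q ^- n) k * poch (q ^+ n.+1 / (A * B)) k)
  / (poch q k * poch q k * poch (q / A) k * poch (q / B) k).

Definition wc e0 e1 n (A' B' A B : F) j : F :=
  cf n A' B' j.+1 * alc r e0 e1 A B j.+1 + cf n A' B' j * bec r e0 e1 A B j
  + (if j is j'.+1 then cf n A' B' j' * gac r e0 e1 A B j' else 0).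

Lemma qS k : (r ^+ 4) ^+ k.+1 = r ^+ 4 * (r ^+ 4) ^+ k.
Proof. exact: exprS. Qed.

Lemma pochS2 y i : poch y i.+2 = poch y i * (1 - y * q ^+ i) * (1 - y * q ^+ i.+1).
Proof. by rewrite !pochS. Qed.

Lemma poch_neq0 y k : (forall j, (j < k)%N -> y * q ^+ j != 1) -> poch y k != 0.
Proof.
move=> H; rewrite /poch; apply/prodf_neq0 => j _.
by rewrite subr_eq0 eq_sym; apply: H.
Qed.

Lemma divr_neq1 (M X : F) : X != 0 -> X != M -> M / X != 1.
Proof.
move=> hX hXM; apply/eqP => E; move/eqP: hXM; apply.
by rewrite -[M](divfK hX) E mul1r.
Qed.

Lemma qpowE (c e f i n : nat) :
  q ^+ c * (q ^+ i) ^+ e * (q ^+ n) ^+ f = q ^+ (c + i * e + n * f).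
Proof. by rewrite !exprD !exprM. Qed.

Lemma pochUp y z i : y * q = z -> 1 - y != 0 ->
  poch z i.+1 = poch y i * (1 - y * q ^+ i) * (1 - y * q ^+ i.+1) / (1 - y).
Proof.
move=> <- hy; apply: (mulfI hy); rewrite -pochSl !pochS; field; by [].

Qed.

Lemma qpowE2 (c n f : nat) : q ^+ c * (q ^+ n) ^+ f = q ^+ (c + n * f).
Proof. by rewrite !exprD !exprM. Qed.

Lemma neq_tr (X M M' : F) : M = M' -> X != M' -> X != M.
Proof. by move=> ->. Qed.

End Coef.

Ltac nzc H :=
  first [ eapply neq_tr; [ | apply: (H 0%N 0%N 0%N) ]; by ring
        | eapply neq_tr; [ | apply: (H 1%N 0%N 0%N) ]; by ring
        | eapply neq_tr; [ | apply: (H 2%N 0%N 0%N) ]; by ring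
        | eapply neq_tr; [ | apply: (H 3%N 0%N 0%N) ]; by ring
        | eapply neq_tr; [ | apply: (H 4%N 0%N 0%N) ]; by ring
        | eapply neq_tr; [ | apply: (H 0%N 1%N 0%N) ]; by ring
        | eapply neq_tr; [ | apply: (H 1%N 1%N 0%N) ]; by ring
        | eapply neq_tr; [ | apply: (H 2%N 1%N 0%N) ]; by ring
        | eapply neq_tr; [ | apply: (H 3%N 1%N 0%N) ]; by ring
        | eapply neq_tr; [ | apply: (H 4%N 1%N 0%N) ]; by ring
        | eapply neq_tr; [ | apply: (H 0%N 0%N 1%N) ]; by ring
        | eapply neq_tr; [ | apply: (H 1%N 0%N 1%N) ]; by ring
        | eapply neq_tr; [ | apply: (H 2%N 0%N 1%N) ]; by ring
        | eapply neq_tr; [ | apply: (H 3%N 0%N 1%N) ]; by ring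
        | eapply neq_tr; [ | apply: (H 4%N 0%N 1%N) ]; by ring
        | eapply neq_tr; [ | apply: (H 0%N 1%N 1%N) ]; by ring
        | eapply neq_tr; [ | apply: (H 1%N 1%N 1%N) ]; by ring
        | eapply neq_tr; [ | apply: (H 2%N 1%N 1%N) ]; by ring
        | eapply neq_tr; [ | apply: (H 3%N 1%N 1%N) ]; by ring
        | eapply neq_tr; [ | apply: (H 4%N 1%N 1%N) ]; by ring ].

Ltac sidec hA hB hAB h1 h1n := repeat (apply/andP; split); try assumption; try exact: oner_neq0;
  try (rewrite subr_eq0; first [nzc hA | nzc hB | nzc hAB | nzc h1 | nzc h1n |
         rewrite eq_sym; first [nzc hA | nzc hB | nzc hAB | nzc h1 | nzc h1n]]).


Ltac nzc1 H :=
  first [ eapply neq_tr; [ | apply: (H 0%N) ]; by ring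
        | eapply neq_tr; [ | apply: (H 1%N) ]; by ring
        | eapply neq_tr; [ | apply: (H 2%N) ]; by ring
        | eapply neq_tr; [ | apply: (H 3%N) ]; by ring
        | eapply neq_tr; [ | apply: (H 4%N) ]; by ring
        | eapply neq_tr; [ | apply: (H 5%N) ]; by ring ].

Ltac nzc0 H :=
  first [ eapply neq_tr; [ | apply: (H 0%N 0%N) ]; by ring
        | eapply neq_tr; [ | apply: (H 1%N 0%N) ]; by ring
        | eapply neq_tr; [ | apply: (H 2%N 0%N) ]; by ring
        | eapply neq_tr; [ | apply: (H 3%N 0%N) ]; by ring
        | eapply neq_tr; [ | apply: (H 4%N 0%N) ]; by ring
        | eapply neq_tr; [ | apply: (H 5%N 0%N) ]; by ring
        | eapply neq_tr; [ | apply: (H 0%N 1%N) ]; by ring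
        | eapply neq_tr; [ | apply: (H 1%N 1%N) ]; by ring
        | eapply neq_tr; [ | apply: (H 2%N 1%N) ]; by ring
        | eapply neq_tr; [ | apply: (H 3%N 1%N) ]; by ring
        | eapply neq_tr; [ | apply: (H 4%N 1%N) ]; by ring
        | eapply neq_tr; [ | apply: (H 5%N 1%N) ]; by ring ].

Ltac sidec0 hA hB hAB h1 h1n := repeat (apply/andP; split); try assumption; try exact: oner_neq0;
  try (rewrite subr_eq0; first [nzc0 hA | nzc0 hB | nzc0 hAB | nzc0 h1 | nzc1 h1n |
         rewrite eq_sym; first [nzc0 hA | nzc0 hB | nzc0 hAB | nzc0 h1 | nzc1 h1n]]).

Section Coef2.
Variable F : fieldType.
Variable r : F.
Local Notation q := (r ^+ 4).
Local Notation poch := (poch r).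

Lemma coef_mm (n i : nat) (A B : F) (hr : r != 0) (hA0 : A != 0) (hB0 : B != 0)
  (hA : forall m : nat, A != q ^+ m) (hB : forall m : nat, B != q ^+ m)
  (hAB : forall m : nat, A * B != q ^+ m) (hq1 : forall m : nat, (0 < m)%N -> q ^+ m != 1)
  (hn : (0 < n)%N) :
  wc r false false n ((r^+4)^-1 * A) ((r^+4)^-1 * B) A B i.+1 = (- A * B * (A * B - q^+2 * q^+n) * (1 - q * q^+n) * (1 - q / A) * (1 - q / B) / (q^+n * r^+12 * ((1 - A) * (1 - B)))) * cf r n.+1 A B i.+1.
Proof.
rewrite /wc /cf /alc /bec /gac /=.
rewrite (@pochL1 _ _ (q ^- n.+1) (q ^- n) i); last by rewrite qS; field; side.
rewrite (@pochL1 _ _ (q ^+ n.+2 / (A * B)) (q ^+ n.+1 / ((r^+4)^-1 * A * ((r^+4)^-1 * B))) i); last by rewrite !qS; field; side.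
rewrite (@pochL1 _ _ (q / A) (q / ((r^+4)^-1 * A)) i); last by field; side.
rewrite (@pochL1 _ _ (q / B) (q / ((r^+4)^-1 * B)) i); last by field; side.
rewrite !pochS2 !pochS.
have hU4 : poch (q / ((r^+4)^-1 * A)) i != 0.
  apply: poch_neq0 => j _; have -> : q / ((r^+4)^-1 * A) * q ^+ j = q ^+ j.+2 / A by rewrite ?qS; field; side.
  by apply: divr_neq1.
have hU5 : poch (q / ((r^+4)^-1 * B)) i != 0.
  apply: poch_neq0 => j _; have -> : q / ((r^+4)^-1 * B) * q ^+ j = q ^+ j.+2 / B by rewrite ?qS; field; side.
  by apply: divr_neq1.
have hU3 : poch q i != 0.
  by apply: poch_neq0 => j _; rewrite -exprS hq1.
rewrite !qS.
set Q := (r^+4)^+i. set N := (r^+4)^+n.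
have hAx c e f : A != q ^+ c * Q ^+ e * N ^+ f by rewrite qpowE.
have hBx c e f : B != q ^+ c * Q ^+ e * N ^+ f by rewrite qpowE.
have hABx c e f : A * B != q ^+ c * Q ^+ e * N ^+ f by rewrite qpowE.
have h1x c e f : 1 != q ^+ c.+1 * Q ^+ e * N ^+ f by rewrite qpowE eq_sym hq1.
have h1n c e : 1 != q ^+ c * Q ^+ e * N by rewrite -[N]expr1 qpowE eq_sym hq1 // addn_gt0 orbC muln_gt0 hn.
have hN : N != 0 by rewrite expf_neq0 // expf_neq0.
have hQ : Q != 0 by rewrite expf_neq0 // expf_neq0.
have h1A : 1 - A != 0 by rewrite subr_eq0 eq_sym (hA 0%N).
have h1B : 1 - B != 0 by rewrite subr_eq0 eq_sym (hB 0%N).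
field.
sidec hAx hBx hABx h1x h1n.
Qed.

Lemma coef_mm0 (n : nat) (A B : F) (hr : r != 0) (hA0 : A != 0) (hB0 : B != 0)
  (hA : forall m : nat, A != q ^+ m) (hB : forall m : nat, B != q ^+ m)
  (hAB : forall m : nat, A * B != q ^+ m) (hq1 : forall m : nat, (0 < m)%N -> q ^+ m != 1)
  (hn : (0 < n)%N) :
  wc r false false n ((r^+4)^-1 * A) ((r^+4)^-1 * B) A B 0 = (- A * B * (A * B - q^+2 * q^+n) * (1 - q * q^+n) * (1 - q / A) * (1 - q / B) / (q^+n * r^+12 * ((1 - A) * (1 - B)))) * cf r n.+1 A B 0.
Proof.
rewrite /wc /cf /alc /bec /gac /= !poch1 !poch0 !expr0 !expr1 ?qS.
set N := (r^+4)^+n.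
have hAx c f : A != q ^+ c * N ^+ f by rewrite qpowE2.
have hBx c f : B != q ^+ c * N ^+ f by rewrite qpowE2.
have hABx c f : A * B != q ^+ c * N ^+ f by rewrite qpowE2.
have h1x c f : 1 != q ^+ c.+1 * N ^+ f by rewrite qpowE2 eq_sym hq1.
have h1n c : 1 != q ^+ c * N by rewrite -[N]expr1 qpowE2 eq_sym hq1 // addn_gt0 orbC muln_gt0 hn.
have hN : N != 0 by rewrite expf_neq0 // expf_neq0.
have h1A : 1 - A != 0 by rewrite subr_eq0 eq_sym (hA 0%N).
have h1B : 1 - B != 0 by rewrite subr_eq0 eq_sym (hB 0%N).
field.
sidec0 hAx hBx hABx h1x h1n.
Qed.

Lemma coef_pp (n i : nat) (A B : F) (hr : r != 0) (hA0 : A != 0) (hB0 : B != 0)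
  (hA : forall m : nat, A != q ^+ m) (hB : forall m : nat, B != q ^+ m)
  (hAB : forall m : nat, A * B != q ^+ m) (hq1 : forall m : nat, (0 < m)%N -> q ^+ m != 1) :
  wc r true true n.+1 (r^+4 * A) (r^+4 * B) A B i.+1 = (- (1 - q^+n.+1) * (1 - q^+n.+1 / (q * A * B)) / (q^+n.+1 * ((1 - A) * (1 - B)) * (1 - A^-1) * (1 - B^-1))) * cf r n A B i.+1.
Proof.
rewrite /wc /cf /alc /bec /gac /=.
have : 1 - (q ^- n.+1) != 0.
  rewrite subr_eq0 eq_sym; have -> : q ^- n.+1 = 1 / q ^+ n.+1 by rewrite ?qS; field; side.
  by apply: divr_neq1; [rewrite !expf_neq0 | rewrite hq1].
move=> hy_10810.
have : 1 - (q ^+ n.+2 / (r^+4 * A * (r^+4 * B))) != 0.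
  rewrite subr_eq0 eq_sym; have -> : q ^+ n.+2 / (r^+4 * A * (r^+4 * B)) = q ^+ n / (A * B) by rewrite ?qS; field; side.
  by apply: divr_neq1; [rewrite mulf_neq0 | exact: hAB].
move=> hy_19805.
have : 1 - (q / (r^+4 * A)) != 0.
  rewrite subr_eq0 eq_sym; have -> : q / (r^+4 * A) = 1 / A by rewrite ?qS; field; side.
  by apply: divr_neq1 => //; exact: (hA 0%N).
move=> hy_63841.
have : 1 - (q / (r^+4 * B)) != 0.
  rewrite subr_eq0 eq_sym; have -> : q / (r^+4 * B) = 1 / B by rewrite ?qS; field; side.
  by apply: divr_neq1 => //; exact: (hB 0%N).
move=> hy_25128.
rewrite (@pochUp _ _ (q ^- n.+1) (q ^- n) i) //; last by rewrite qS; field; side.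
rewrite (@pochUp _ _ (q ^+ n.+2 / (r^+4 * A * (r^+4 * B))) (q ^+ n.+1 / (A * B)) i) //; last by rewrite !qS; field; side.
rewrite (@pochUp _ _ (q / (r^+4 * A)) (q / A) i) //; last by field; side.
rewrite (@pochUp _ _ (q / (r^+4 * B)) (q / B) i) //; last by field; side.
rewrite !pochS2 !pochS.
have hU4 : poch (q / (r^+4 * A)) i != 0.
  apply: poch_neq0 => j _; have -> : q / (r^+4 * A) * q ^+ j = q ^+ j / A by rewrite ?qS; field; side.
  by apply: divr_neq1.
have hU5 : poch (q / (r^+4 * B)) i != 0.
  apply: poch_neq0 => j _; have -> : q / (r^+4 * B) * q ^+ j = q ^+ j / B by rewrite ?qS; field; side.
  by apply: divr_neq1.
have hU3 : poch q i != 0.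
  by apply: poch_neq0 => j _; rewrite -exprS hq1.
rewrite !qS.
set Q := (r^+4)^+i. set N := (r^+4)^+n.
have hAx c e f : A != q ^+ c * Q ^+ e * N ^+ f by rewrite qpowE.
have hBx c e f : B != q ^+ c * Q ^+ e * N ^+ f by rewrite qpowE.
have hABx c e f : A * B != q ^+ c * Q ^+ e * N ^+ f by rewrite qpowE.
have h1x c e f : 1 != q ^+ c.+1 * Q ^+ e * N ^+ f by rewrite qpowE eq_sym hq1.
have hN : N != 0 by rewrite expf_neq0 // expf_neq0.
have hQ : Q != 0 by rewrite expf_neq0 // expf_neq0.
have h1A : 1 - A != 0 by rewrite subr_eq0 eq_sym (hA 0%N).
have h1B : 1 - B != 0 by rewrite subr_eq0 eq_sym (hB 0%N).
field.
sidec hAx hBx hABx h1x h1x.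
Qed.

Lemma coef_pp0 (n : nat) (A B : F) (hr : r != 0) (hA0 : A != 0) (hB0 : B != 0)
  (hA : forall m : nat, A != q ^+ m) (hB : forall m : nat, B != q ^+ m)
  (hAB : forall m : nat, A * B != q ^+ m) (hq1 : forall m : nat, (0 < m)%N -> q ^+ m != 1) :
  wc r true true n.+1 (r^+4 * A) (r^+4 * B) A B 0 = (- (1 - q^+n.+1) * (1 - q^+n.+1 / (q * A * B)) / (q^+n.+1 * ((1 - A) * (1 - B)) * (1 - A^-1) * (1 - B^-1))) * cf r n A B 0.
Proof.
rewrite /wc /cf /alc /bec /gac /= !poch1 !poch0 !expr0 !expr1 ?qS.
set N := (r^+4)^+n.
have hAx c f : A != q ^+ c * N ^+ f by rewrite qpowE2.
have hBx c f : B != q ^+ c * N ^+ f by rewrite qpowE2.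
have hABx c f : A * B != q ^+ c * N ^+ f by rewrite qpowE2.
have h1x c f : 1 != q ^+ c.+1 * N ^+ f by rewrite qpowE2 eq_sym hq1.
have hN : N != 0 by rewrite expf_neq0 // expf_neq0.
have h1A : 1 - A != 0 by rewrite subr_eq0 eq_sym (hA 0%N).
have h1B : 1 - B != 0 by rewrite subr_eq0 eq_sym (hB 0%N).
field.
sidec0 hAx hBx hABx h1x h1x.
Qed.

Lemma coef_pm (n i : nat) (A B : F) (hr : r != 0) (hA0 : A != 0) (hB0 : B != 0)
  (hA : forall m : nat, A != q ^+ m) (hB : forall m : nat, B != q ^+ m)
  (hAB : forall m : nat, A * B != q ^+ m) (hq1 : forall m : nat, (0 < m)%N -> q ^+ m != 1)
  (hn : (0 < n)%N) :
  wc r true false n (r^+4 * A) ((r^+4)^-1 * B) A B i.+1 = (- (B - q * q^+n) * B * (1 - q^+n / A) * (1 - q / B) / (q^+n * r^+6 * ((1 - A) * (1 - B)) * (1 - A^-1))) * cf r n A B i.+1.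
Proof.
rewrite /wc /cf /alc /bec /gac /=.
have : 1 - (q / (r^+4 * A)) != 0.
  rewrite subr_eq0 eq_sym; have -> : q / (r^+4 * A) = 1 / A by rewrite ?qS; field; side.
  by apply: divr_neq1 => //; exact: (hA 0%N).
move=> hy_63841.
rewrite (@pochR1 _ _ (q ^+ n.+1 / (A * B)) (q ^+ n.+1 / (r^+4 * A * ((r^+4)^-1 * B))) i); last by field; side.
rewrite (@pochUp _ _ (q / (r^+4 * A)) (q / A) i) //; last by field; side.
rewrite (@pochL1 _ _ (q / B) (q / ((r^+4)^-1 * B)) i); last by field; side.
rewrite !pochS2 !pochS.
have hU4 : poch (q / (r^+4 * A)) i != 0.
  apply: poch_neq0 => j _; have -> : q / (r^+4 * A) * q ^+ j = q ^+ j / A by rewrite ?qS; field; side.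
  by apply: divr_neq1.
have hU5 : poch (q / ((r^+4)^-1 * B)) i != 0.
  apply: poch_neq0 => j _; have -> : q / ((r^+4)^-1 * B) * q ^+ j = q ^+ j.+2 / B by rewrite ?qS; field; side.
  by apply: divr_neq1.
have hU3 : poch q i != 0.
  by apply: poch_neq0 => j _; rewrite -exprS hq1.
rewrite !qS.
set Q := (r^+4)^+i. set N := (r^+4)^+n.
have hAx c e f : A != q ^+ c * Q ^+ e * N ^+ f by rewrite qpowE.
have hBx c e f : B != q ^+ c * Q ^+ e * N ^+ f by rewrite qpowE.
have hABx c e f : A * B != q ^+ c * Q ^+ e * N ^+ f by rewrite qpowE.
have h1x c e f : 1 != q ^+ c.+1 * Q ^+ e * N ^+ f by rewrite qpowE eq_sym hq1.
have h1n c e : 1 != q ^+ c * Q ^+ e * N by rewrite -[N]expr1 qpowE eq_sym hq1 // addn_gt0 orbC muln_gt0 hn.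
have hN : N != 0 by rewrite expf_neq0 // expf_neq0.
have hQ : Q != 0 by rewrite expf_neq0 // expf_neq0.
have h1A : 1 - A != 0 by rewrite subr_eq0 eq_sym (hA 0%N).
have h1B : 1 - B != 0 by rewrite subr_eq0 eq_sym (hB 0%N).
field.
sidec hAx hBx hABx h1x h1n.
Qed.

Lemma coef_pm0 (n : nat) (A B : F) (hr : r != 0) (hA0 : A != 0) (hB0 : B != 0)
  (hA : forall m : nat, A != q ^+ m) (hB : forall m : nat, B != q ^+ m)
  (hAB : forall m : nat, A * B != q ^+ m) (hq1 : forall m : nat, (0 < m)%N -> q ^+ m != 1)
  (hn : (0 < n)%N) :
  wc r true false n (r^+4 * A) ((r^+4)^-1 * B) A B 0 = (- (B - q * q^+n) * B * (1 - q^+n / A) * (1 - q / B) / (q^+n * r^+6 * ((1 - A) * (1 - B)) * (1 - A^-1))) * cf r n A B 0.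
Proof.
rewrite /wc /cf /alc /bec /gac /= !poch1 !poch0 !expr0 !expr1 ?qS.
set N := (r^+4)^+n.
have hAx c f : A != q ^+ c * N ^+ f by rewrite qpowE2.
have hBx c f : B != q ^+ c * N ^+ f by rewrite qpowE2.
have hABx c f : A * B != q ^+ c * N ^+ f by rewrite qpowE2.
have h1x c f : 1 != q ^+ c.+1 * N ^+ f by rewrite qpowE2 eq_sym hq1.
have h1n c : 1 != q ^+ c * N by rewrite -[N]expr1 qpowE2 eq_sym hq1 // addn_gt0 orbC muln_gt0 hn.
have hN : N != 0 by rewrite expf_neq0 // expf_neq0.
have h1A : 1 - A != 0 by rewrite subr_eq0 eq_sym (hA 0%N).
have h1B : 1 - B != 0 by rewrite subr_eq0 eq_sym (hB 0%N).
field.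
sidec0 hAx hBx hABx h1x h1n.
Qed.

Lemma coef_mp (n i : nat) (A B : F) (hr : r != 0) (hA0 : A != 0) (hB0 : B != 0)
  (hA : forall m : nat, A != q ^+ m) (hB : forall m : nat, B != q ^+ m)
  (hAB : forall m : nat, A * B != q ^+ m) (hq1 : forall m : nat, (0 < m)%N -> q ^+ m != 1)
  (hn : (0 < n)%N) :
  wc r false true n ((r^+4)^-1 * A) (r^+4 * B) A B i.+1 = (- (A - q * q^+n) * A * (1 - q^+n / B) * (1 - q / A) / (q^+n * r^+6 * ((1 - A) * (1 - B)) * (1 - B^-1))) * cf r n A B i.+1.
Proof.
rewrite /wc /cf /alc /bec /gac /=.
have : 1 - (q / (r^+4 * B)) != 0.
  rewrite subr_eq0 eq_sym; have -> : q / (r^+4 * B) = 1 / B by rewrite ?qS; field; side.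
  by apply: divr_neq1 => //; exact: (hB 0%N).
move=> hy_25128.
rewrite (@pochR1 _ _ (q ^+ n.+1 / (A * B)) (q ^+ n.+1 / ((r^+4)^-1 * A * (r^+4 * B))) i); last by field; side.
rewrite (@pochUp _ _ (q / (r^+4 * B)) (q / B) i) //; last by field; side.
rewrite (@pochL1 _ _ (q / A) (q / ((r^+4)^-1 * A)) i); last by field; side.
rewrite !pochS2 !pochS.
have hU4 : poch (q / ((r^+4)^-1 * A)) i != 0.
  apply: poch_neq0 => j _; have -> : q / ((r^+4)^-1 * A) * q ^+ j = q ^+ j.+2 / A by rewrite ?qS; field; side.
  by apply: divr_neq1.
have hU5 : poch (q / (r^+4 * B)) i != 0.
  apply: poch_neq0 => j _; have -> : q / (r^+4 * B) * q ^+ j = q ^+ j / B by rewrite ?qS; field; side.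
  by apply: divr_neq1.
have hU3 : poch q i != 0.
  by apply: poch_neq0 => j _; rewrite -exprS hq1.
rewrite !qS.
set Q := (r^+4)^+i. set N := (r^+4)^+n.
have hAx c e f : A != q ^+ c * Q ^+ e * N ^+ f by rewrite qpowE.
have hBx c e f : B != q ^+ c * Q ^+ e * N ^+ f by rewrite qpowE.
have hABx c e f : A * B != q ^+ c * Q ^+ e * N ^+ f by rewrite qpowE.
have h1x c e f : 1 != q ^+ c.+1 * Q ^+ e * N ^+ f by rewrite qpowE eq_sym hq1.
have h1n c e : 1 != q ^+ c * Q ^+ e * N by rewrite -[N]expr1 qpowE eq_sym hq1 // addn_gt0 orbC muln_gt0 hn.
have hN : N != 0 by rewrite expf_neq0 // expf_neq0.
have hQ : Q != 0 by rewrite expf_neq0 // expf_neq0.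
have h1A : 1 - A != 0 by rewrite subr_eq0 eq_sym (hA 0%N).
have h1B : 1 - B != 0 by rewrite subr_eq0 eq_sym (hB 0%N).
field.
sidec hAx hBx hABx h1x h1n.
Qed.

Lemma coef_mp0 (n : nat) (A B : F) (hr : r != 0) (hA0 : A != 0) (hB0 : B != 0)
  (hA : forall m : nat, A != q ^+ m) (hB : forall m : nat, B != q ^+ m)
  (hAB : forall m : nat, A * B != q ^+ m) (hq1 : forall m : nat, (0 < m)%N -> q ^+ m != 1)
  (hn : (0 < n)%N) :
  wc r false true n ((r^+4)^-1 * A) (r^+4 * B) A B 0 = (- (A - q * q^+n) * A * (1 - q^+n / B) * (1 - q / A) / (q^+n * r^+6 * ((1 - A) * (1 - B)) * (1 - B^-1))) * cf r n A B 0.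
Proof.
rewrite /wc /cf /alc /bec /gac /= !poch1 !poch0 !expr0 !expr1 ?qS.
set N := (r^+4)^+n.
have hAx c f : A != q ^+ c * N ^+ f by rewrite qpowE2.
have hBx c f : B != q ^+ c * N ^+ f by rewrite qpowE2.
have hABx c f : A * B != q ^+ c * N ^+ f by rewrite qpowE2.
have h1x c f : 1 != q ^+ c.+1 * N ^+ f by rewrite qpowE2 eq_sym hq1.
have h1n c : 1 != q ^+ c * N by rewrite -[N]expr1 qpowE2 eq_sym hq1 // addn_gt0 orbC muln_gt0 hn.
have hN : N != 0 by rewrite expf_neq0 // expf_neq0.
have h1A : 1 - A != 0 by rewrite subr_eq0 eq_sym (hA 0%N).
have h1B : 1 - B != 0 by rewrite subr_eq0 eq_sym (hB 0%N).
field.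
sidec0 hAx hBx hABx h1x h1n.
Qed.

End Coef2.

Section NfS.
Variable F : fieldType.
Variable r : F.
Local Notation q := (r ^+ 4).
Local Notation poch := (poch r).

Definition Nf n (A B : F) : F :=
  (-1) ^+ n * r ^- (2 * n) * (poch q n * poch (q / A) n * poch (q / B) n)
  / poch (q ^+ n.+1 / (A * B)) n.

Lemma pochSw y z n : y * q = z -> 1 - y != 0 ->
  poch z n = poch y n * (1 - y * q ^+ n) / (1 - y).
Proof. move=> <- hy; apply: (mulfI hy); rewrite -pochSl pochS; field; by []. Qed.

Lemma pochSw2 y z n : y * q = z -> 1 - y * q ^+ n != 0 ->
  poch y n = (1 - y) * poch z n / (1 - y * q ^+ n).
Proof. move=> <- hy; apply: (mulIf hy); rewrite -pochSl pochS divfK //. Qed.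

Variables (A B : F) (n : nat).
Hypotheses (hr : r != 0) (hA0 : A != 0) (hB0 : B != 0)
  (hA : forall m : nat, A != q ^+ m) (hB : forall m : nat, B != q ^+ m)
  (hAB : forall m : nat, A * B != q ^+ m) (hq1 : forall m : nat, (0 < m)%N -> q ^+ m != 1).

Let qn0 m : q ^+ m != 0. Proof. by rewrite !expf_neq0. Qed.
Let h1A : 1 - A != 0. Proof. by rewrite subr_eq0 eq_sym (hA 0%N). Qed.
Let h1B : 1 - B != 0. Proof. by rewrite subr_eq0 eq_sym (hB 0%N). Qed.
Let hdiv (M X : F) (m : nat) : X != 0 -> X != q ^+ m -> M = q ^+ m -> 1 - M / X != 0.
Proof. by move=> hX hXM ->; rewrite subr_eq0 eq_sym divr_neq1. Qed.

Lemma Nf_mm : Nf n.+1 A B =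
  - r ^- 2 * (1 - q * q ^+ n) * (1 - q / A) * (1 - q / B) / (1 - q ^+ n.+2 / (A * B))
  * Nf n ((r^+4)^-1 * A) ((r^+4)^-1 * B).
Proof.
rewrite /Nf pochS.
rewrite (@pochL1 _ _ (q / A) (q / ((r^+4)^-1 * A)) n); last by field; side.
rewrite (@pochL1 _ _ (q / B) (q / ((r^+4)^-1 * B)) n); last by field; side.
rewrite (@pochL1 _ _ (q ^+ n.+2 / (A * B)) (q ^+ n.+1 / ((r^+4)^-1 * A * ((r^+4)^-1 * B))) n); last by rewrite !qS; field; side.
have h1 : 1 - q ^+ n.+2 / (A * B) != 0 by exact: (@hdiv _ _ n.+2 (mulf_neq0 hA0 hB0) (hAB _) erefl).
have h2 : poch (q ^+ n.+1 / ((r^+4)^-1 * A * ((r^+4)^-1 * B))) n != 0.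
  apply: poch_neq0 => j _.
  have -> : q ^+ n.+1 / ((r^+4)^-1 * A * ((r^+4)^-1 * B)) * q ^+ j = q ^+ (n.+3 + j) / (A * B).
    by rewrite exprD !qS; field; side.
  by apply: divr_neq1; rewrite ?mulf_neq0.
rewrite exprS mulnS exprD invfM.
have h3 : (-1) ^+ n != 0 :> F by rewrite expf_neq0 // oppr_eq0 oner_neq0.
have h4 : r ^+ (2 * n) != 0 by rewrite expf_neq0.
field.
side.
by rewrite subr_eq0 hAB.
Qed.

Lemma Nf_pp : Nf n A B =
  - r ^+ 2 * (1 - q ^+ n / (A * B)) / ((1 - q * q ^+ n) * (1 - A^-1) * (1 - B^-1))
  * Nf n.+1 (r^+4 * A) (r^+4 * B).
Proof.
rewrite /Nf pochS.
rewrite (@pochL1 _ _ (q / (r^+4 * A)) (q / A) n); last by field; side.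
rewrite (@pochL1 _ _ (q / (r^+4 * B)) (q / B) n); last by field; side.
rewrite (@pochL1 _ _ (q ^+ n.+2 / (r^+4 * A * (r^+4 * B))) (q ^+ n.+1 / (A * B)) n); last by rewrite !qS; field; side.
have h2 : poch (q ^+ n.+1 / (A * B)) n != 0.
  apply: poch_neq0 => j _.
  have -> : q ^+ n.+1 / (A * B) * q ^+ j = q ^+ (n.+1 + j) / (A * B) by rewrite exprD; field; side.
  by apply: divr_neq1; rewrite ?mulf_neq0.
move: h2; set P2 := poch (q ^+ n.+1 / (A * B)) n => h2.
rewrite [(-1) ^+ n.+1]exprS mulnS exprD invfM !qS.
have h3 : (-1) ^+ n != 0 :> F by rewrite expf_neq0 // oppr_eq0 oner_neq0.
have h4 : r ^+ (2 * n) != 0 by rewrite expf_neq0.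
have h5 : A * B - q ^+ n != 0 by rewrite subr_eq0 hAB.
have h6 : 1 - q * q ^+ n != 0 by rewrite subr_eq0 eq_sym -exprS hq1.
have h7 : A - 1 != 0 by rewrite subr_eq0 (hA 0%N).
have h8 : B - 1 != 0 by rewrite subr_eq0 (hB 0%N).
field.
side.
Qed.

Lemma Nf_pm : Nf n A B =
  (1 - q ^+ n / A) * (1 - q / B) / ((1 - A^-1) * (1 - q * q ^+ n / B))
  * Nf n (r^+4 * A) ((r^+4)^-1 * B).
Proof.
have h1 : 1 - q / (r^+4 * A) != 0.
  have -> : q / (r^+4 * A) = 1 / A by field; side.
  by rewrite subr_eq0 eq_sym divr_neq1 // (hA 0%N).
have h2 : 1 - q / B * q ^+ n != 0.
  have -> : q / B * q ^+ n = q ^+ n.+1 / B by rewrite qS; field; side.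
  by rewrite subr_eq0 eq_sym divr_neq1.
rewrite /Nf (@pochSw (q / (r^+4 * A)) (q / A) n) //; last by field; side.
rewrite (@pochSw2 (q / B) (q / ((r^+4)^-1 * B)) n) //; last by field; side.
rewrite (@pochE _ r (q ^+ n.+1 / (A * B)) (q ^+ n.+1 / (r^+4 * A * ((r^+4)^-1 * B))) n); last by field; side.
have h3 : poch (q ^+ n.+1 / (r^+4 * A * ((r^+4)^-1 * B))) n != 0.
  apply: poch_neq0 => j _.
  have -> : q ^+ n.+1 / (r^+4 * A * ((r^+4)^-1 * B)) * q ^+ j = q ^+ (n.+1 + j) / (A * B).
    by rewrite exprD; field; side.
  by apply: divr_neq1; rewrite ?mulf_neq0.
have h4 : r ^+ (2 * n) != 0 by rewrite expf_neq0.
have h5 : B - q * q ^+ n != 0 by rewrite subr_eq0 -exprS hB.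
have h7 : A - 1 != 0 by rewrite subr_eq0 (hA 0%N).
have h8 : (-1) ^+ n != 0 :> F by rewrite expf_neq0 // oppr_eq0 oner_neq0.
field.
side.
Qed.

Lemma Nf_mp : Nf n A B =
  (1 - q ^+ n / B) * (1 - q / A) / ((1 - B^-1) * (1 - q * q ^+ n / A))
  * Nf n ((r^+4)^-1 * A) (r^+4 * B).
Proof.
have h1 : 1 - q / (r^+4 * B) != 0.
  have -> : q / (r^+4 * B) = 1 / B by field; side.
  by rewrite subr_eq0 eq_sym divr_neq1 // (hB 0%N).
have h2 : 1 - q / A * q ^+ n != 0.
  have -> : q / A * q ^+ n = q ^+ n.+1 / A by rewrite qS; field; side.
  by rewrite subr_eq0 eq_sym divr_neq1.
rewrite /Nf (@pochSw (q / (r^+4 * B)) (q / B) n) //; last by field; side.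
rewrite (@pochSw2 (q / A) (q / ((r^+4)^-1 * A)) n) //; last by field; side.
rewrite (@pochE _ r (q ^+ n.+1 / (A * B)) (q ^+ n.+1 / ((r^+4)^-1 * A * (r^+4 * B))) n); last by field; side.
have h3 : poch (q ^+ n.+1 / ((r^+4)^-1 * A * (r^+4 * B))) n != 0.
  apply: poch_neq0 => j _.
  have -> : q ^+ n.+1 / ((r^+4)^-1 * A * (r^+4 * B)) * q ^+ j = q ^+ (n.+1 + j) / (A * B).
    by rewrite exprD; field; side.
  by apply: divr_neq1; rewrite ?mulf_neq0.
have h4 : r ^+ (2 * n) != 0 by rewrite expf_neq0.
have h5 : A - q * q ^+ n != 0 by rewrite subr_eq0 -exprS hA.
have h7 : B - 1 != 0 by rewrite subr_eq0 (hB 0%N).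
have h8 : (-1) ^+ n != 0 :> F by rewrite expf_neq0 // oppr_eq0 oner_neq0.
field.
side.
Qed.

End NfS.

Section Asm.
Variable F : fieldType.
Variable r : F.
Local Notation q := (r ^+ 4).
Local Notation poch := (poch r).

Definition Ssum n x (A B : F) := \sum_(k < n.+1) cf r n A B k * phi r k x.

Lemma P_NS n x x0 x1 : P r n x x0 x1 = Nf r n (x0^+2) (x1^+2) * Ssum n x (x0^+2) (x1^+2).
Proof. by []. Qed.

Lemma Lop_lin e0 e1 (c : F) g x A B :
  Lop r e0 e1 (fun y => c * g y) x A B = c * Lop r e0 e1 g x A B.
Proof. by rewrite /Lop; ring. Qed.

Lemma Lop_sum e0 e1 M (u : nat -> F) x A B :
  Lop r e0 e1 (fun y => \sum_(k < M) u k * phi r k y) x A B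
  = \sum_(k < M) u k * Lop r e0 e1 (phi r k) x A B.
Proof.
rewrite /Lop !mulr_sumr -!big_split -sumrB /=.
by apply: eq_bigr => k _; ring.
Qed.

Lemma sum_ext (f : nat -> F) a b : (a <= b)%N ->
  (forall k, (a <= k)%N -> (k < b)%N -> f k = 0) ->
  \sum_(k < a) f k = \sum_(k < b) f k.
Proof.
move=> hab hf; elim: b hab hf => [|b IH] hab hf.
  by move: hab; rewrite leqn0 => /eqP ->.
case: (ltngtP a b.+1) hab => // [hlt|->] _; last by [].
rewrite big_ord_recr /= hf // addr0; apply: IH => // k hk hkb.
by apply: hf => //; apply: ltnW.
Qed.

Lemma poch_qn_zero (hr : r != 0) n m : poch (q ^- n) (n.+1 + m) = 0.
Proof.
elim: m => [|m IH]; last by rewrite addnS pochS IH mul0r.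
by rewrite addn0 pochS mulVf ?subrr ?mulr0 // !expf_neq0.
Qed.

Lemma cf_zero (hr : r != 0) n A B k : (n < k)%N -> cf r n A B k = 0.
Proof.
move=> hk; rewrite /cf -(subnKC hk) poch_qn_zero //.
by rewrite !(mul0r, mulr0).
Qed.

Lemma sum_shift (u al be ga : nat -> F) (x : F) N : al 0%N = 0 -> u N = 0 -> u N.+1 = 0 ->
  \sum_(k < N.+1) u k * (al k * phi r k.-1 x + be k * phi r k x + ga k * phi r k.+1 x) =
  \sum_(j < N.+1) (u j.+1 * al j.+1 + u j * be j
                  + (if (j : nat) is j'.+1 then u j' * ga j' else 0)) * phi r j x.
Proof.
move=> h0 hN hN1.
have E1 : \sum_(k < N.+1) u k * (al k * phi r k.-1 x) = \sum_(j < N.+1) u j.+1 * al j.+1 * phi r j x.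
  rewrite big_ord_recl big_ord_recr /= h0 hN1 !mul0r mulr0 add0r addr0.
  by apply: eq_bigr => k _; rewrite mulrA.
have E3 : \sum_(k < N.+1) u k * (ga k * phi r k.+1 x) =
          \sum_(j < N.+1) (if (j : nat) is j'.+1 then u j' * ga j' else 0) * phi r j x.
  rewrite [LHS]big_ord_recr [RHS]big_ord_recl /= hN !mul0r addr0 add0r.
  by apply: eq_bigr => k _; rewrite mulrA.
have -> : \sum_(k < N.+1) u k * (al k * phi r k.-1 x + be k * phi r k x + ga k * phi r k.+1 x) =
   \sum_(k < N.+1) u k * (al k * phi r k.-1 x) + \sum_(k < N.+1) u k * be k * phi r k x
   + \sum_(k < N.+1) u k * (ga k * phi r k.+1 x).
  by rewrite -!big_split /=; apply: eq_bigr => k _; ring.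
rewrite E1 E3 -!big_split /=; apply: eq_bigr => k _; ring.
Qed.

Lemma assemble e0 e1 n m (A' B' A B x K rho C : F)
  (hr : r != 0) (hx : x != 0) (hx2 : 1 - x ^+ 2 != 0)
  (hx3 : 1 - r^+2 * x != 0) (hx4 : x - r ^+ 2 != 0) (hA : 1 - A != 0) (hB : 1 - B != 0)
  (hm : (m <= n.+2)%N)
  (hNf : Nf r m A B = rho * Nf r n A' B')
  (hC : forall j, wc r e0 e1 n A' B' A B j = C * cf r m A B j)
  (hK : C = K * rho) :
  Lop r e0 e1 (fun y => Nf r n A' B' * Ssum n y A' B') x A B = K * (Nf r m A B * Ssum m x A B).
Proof.
rewrite Lop_lin /Ssum Lop_sum.
rewrite (eq_bigr (fun k : 'I_n.+1 => cf r n A' B' k * (alc r e0 e1 A B k * phi r k.-1 x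
   + bec r e0 e1 A B k * phi r k x + gac r e0 e1 A B k * phi r k.+1 x))); last first.
  by move=> k _; rewrite perk.
rewrite (@sum_ext (fun k => cf r n A' B' k * (alc r e0 e1 A B k * phi r k.-1 x
   + bec r e0 e1 A B k * phi r k x + gac r e0 e1 A B k * phi r k.+1 x)) n.+1 n.+3); last first.
- by move=> k hk _; rewrite cf_zero ?mul0r //; lia.
- by lia.
cbv beta.
rewrite (@sum_shift (cf r n A' B') (alc r e0 e1 A B) (bec r e0 e1 A B) (gac r e0 e1 A B) x n.+2);
  try (by rewrite cf_zero //; lia);
  try (by case: (e0); case: (e1); rewrite /alc /= ?expr0 ?subrr ?expr0n /= ?mul0r).
rewrite (@sum_ext (fun k => cf r m A B k * phi r k x) m.+1 n.+3); last first.
- by move=> k hk _; rewrite cf_zero ?mul0r //; lia.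
- by lia.
cbv beta.
rewrite hNf.
have -> : \sum_(j < n.+3) (cf r n A' B' j.+1 * alc r e0 e1 A B j.+1 +
      cf r n A' B' j * bec r e0 e1 A B j +
      (if (nat_of_ord j) is j'.+1 then cf r n A' B' j' * gac r e0 e1 A B j' else 0)) * phi r j x
    = \sum_(j < n.+3) (K * rho) * (cf r m A B j * phi r j x).
  by apply: eq_bigr => j _; rewrite mulrA -hK -(hC j).
by rewrite -mulr_sumr; ring.
Qed.

End Asm.

Section LopP.
Variable F : fieldType.
Variable r : F.
Local Notation q := (r ^+ 4).
Variables (x x0 x1 : F) (n : nat).
Hypotheses (hr : r != 0) (hx : x != 0) (hx2 : 1 - x ^+ 2 != 0)
  (hx3 : 1 - r^+2 * x != 0) (hx4 : x - r ^+ 2 != 0)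
  (hx0 : x0 != 0) (hx1 : x1 != 0)
  (hA : forall m : nat, x0 ^+ 2 != q ^+ m) (hB : forall m : nat, x1 ^+ 2 != q ^+ m)
  (hAB : forall m : nat, x0 ^+ 2 * x1 ^+ 2 != q ^+ m)
  (hq1 : forall m : nat, (0 < m)%N -> q ^+ m != 1).

Let hA0 : x0 ^+ 2 != 0. Proof. by rewrite expf_neq0. Qed.
Let hB0 : x1 ^+ 2 != 0. Proof. by rewrite expf_neq0. Qed.
Let h1A : 1 - x0 ^+ 2 != 0. Proof. by rewrite subr_eq0 eq_sym (hA 0%N). Qed.
Let h1B : 1 - x1 ^+ 2 != 0. Proof. by rewrite subr_eq0 eq_sym (hB 0%N). Qed.
Let hAm1 : x0 ^+ 2 - 1 != 0. Proof. by rewrite subr_eq0 (hA 0%N). Qed.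
Let hBm1 : x1 ^+ 2 - 1 != 0. Proof. by rewrite subr_eq0 (hB 0%N). Qed.

Lemma sqm z : (r ^- 2 * z) ^+ 2 = (r ^+ 4)^-1 * z ^+ 2.
Proof. by rewrite exprMn exprVn -exprM. Qed.
Lemma sqp z : (r ^+ 2 * z) ^+ 2 = r ^+ 4 * z ^+ 2.
Proof. by rewrite exprMn -exprM. Qed.

Lemma LopP_mm (hn : (0 < n)%N) :
  Lop r false false (fun y => P r n y (r ^- 2 * x0) (r ^- 2 * x1)) x (x0 ^+ 2) (x1 ^+ 2) =
  r ^- (4 * n + 10) * (x0 ^+ 2 * x1 ^+ 2 - (r ^+ 4) ^+ (n + 2)) ^+ 2
    / ((1 - x0 ^+ 2) * (1 - x1 ^+ 2)) * P r n.+1 x x0 x1.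
Proof.
change (Lop r false false (fun y => Nf r n ((r ^- 2 * x0) ^+ 2) ((r ^- 2 * x1) ^+ 2)
   * Ssum r n y ((r ^- 2 * x0) ^+ 2) ((r ^- 2 * x1) ^+ 2)) x (x0 ^+ 2) (x1 ^+ 2) =
  r ^- (4 * n + 10) * (x0 ^+ 2 * x1 ^+ 2 - (r ^+ 4) ^+ (n + 2)) ^+ 2
    / ((1 - x0 ^+ 2) * (1 - x1 ^+ 2)) * (Nf r n.+1 (x0 ^+ 2) (x1 ^+ 2) * Ssum r n.+1 x (x0 ^+ 2) (x1 ^+ 2))).
rewrite !sqm.
eapply (@assemble _ r false false n n.+1); try eassumption.
- by lia.
- by apply: Nf_mm.
- by case=> [|i]; [apply: coef_mm0 | apply: coef_mm].
- rewrite [r ^+ (4 * n + 10)]exprD [r ^+ (4 * n)]exprM [_ ^+ (n + 2)]exprD.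
  have h3 : x0 ^+ 2 * x1 ^+ 2 - q ^+ n.+2 != 0 by rewrite subr_eq0 hAB.
  rewrite !qS expr0; field.
  side.
  by rewrite exprMn -!qS subr_eq0 hAB.
Qed.

Lemma LopP_pm (hn : (0 < n)%N) :
  Lop r true false (fun y => P r n y (r ^+ 2 * x0) (r ^- 2 * x1)) x (x0 ^+ 2) (x1 ^+ 2) =
  - r ^- (4 * n + 6) * (x1 ^+ 2 - (r ^+ 4) ^+ n.+1) ^+ 2
    / ((1 - x0 ^+ 2) * (1 - x1 ^+ 2)) * P r n x x0 x1.
Proof.
change (Lop r true false (fun y => Nf r n ((r ^+ 2 * x0) ^+ 2) ((r ^- 2 * x1) ^+ 2)
   * Ssum r n y ((r ^+ 2 * x0) ^+ 2) ((r ^- 2 * x1) ^+ 2)) x (x0 ^+ 2) (x1 ^+ 2) =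
  - r ^- (4 * n + 6) * (x1 ^+ 2 - (r ^+ 4) ^+ n.+1) ^+ 2
    / ((1 - x0 ^+ 2) * (1 - x1 ^+ 2)) * (Nf r n (x0 ^+ 2) (x1 ^+ 2) * Ssum r n x (x0 ^+ 2) (x1 ^+ 2))).
rewrite sqm sqp.
eapply (@assemble _ r true false n n); try eassumption.
- by lia.
- by apply: Nf_pm.
- by case=> [|i]; [apply: coef_pm0 | apply: coef_pm].
- rewrite [r ^+ (4 * n + 6)]exprD [r ^+ (4 * n)]exprM.
  have h3 : x1 ^+ 2 - q * q ^+ n != 0 by rewrite subr_eq0 -qS hB.
  have h4 : x0 ^+ 2 - q ^+ n != 0 by rewrite subr_eq0 hA.
  rewrite !qS; field.
  side.
Qed.

Lemma LopP_mp (hn : (0 < n)%N) :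
  Lop r false true (fun y => P r n y (r ^- 2 * x0) (r ^+ 2 * x1)) x (x0 ^+ 2) (x1 ^+ 2) =
  - r ^- (4 * n + 6) * (x0 ^+ 2 - (r ^+ 4) ^+ n.+1) ^+ 2
    / ((1 - x0 ^+ 2) * (1 - x1 ^+ 2)) * P r n x x0 x1.
Proof.
change (Lop r false true (fun y => Nf r n ((r ^- 2 * x0) ^+ 2) ((r ^+ 2 * x1) ^+ 2)
   * Ssum r n y ((r ^- 2 * x0) ^+ 2) ((r ^+ 2 * x1) ^+ 2)) x (x0 ^+ 2) (x1 ^+ 2) =
  - r ^- (4 * n + 6) * (x0 ^+ 2 - (r ^+ 4) ^+ n.+1) ^+ 2
    / ((1 - x0 ^+ 2) * (1 - x1 ^+ 2)) * (Nf r n (x0 ^+ 2) (x1 ^+ 2) * Ssum r n x (x0 ^+ 2) (x1 ^+ 2))).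
rewrite sqm sqp.
eapply (@assemble _ r false true n n); try eassumption.
- by lia.
- by apply: Nf_mp.
- by case=> [|i]; [apply: coef_mp0 | apply: coef_mp].
- rewrite [r ^+ (4 * n + 6)]exprD [r ^+ (4 * n)]exprM.
  have h3 : x0 ^+ 2 - q * q ^+ n != 0 by rewrite subr_eq0 -qS hA.
  have h4 : x1 ^+ 2 - q ^+ n != 0 by rewrite subr_eq0 hB.
  rewrite !qS; field.
  side.
Qed.

Lemma LopP_pp :
  Lop r true true (fun y => P r n.+1 y (r ^+ 2 * x0) (r ^+ 2 * x1)) x (x0 ^+ 2) (x1 ^+ 2) =
  r ^- (4 * n.+1 + 2) * (1 - (r ^+ 4) ^+ n.+1) ^+ 2
    / ((1 - x0 ^+ 2) * (1 - x1 ^+ 2)) * P r n x x0 x1.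
Proof.
change (Lop r true true (fun y => Nf r n.+1 ((r ^+ 2 * x0) ^+ 2) ((r ^+ 2 * x1) ^+ 2)
   * Ssum r n.+1 y ((r ^+ 2 * x0) ^+ 2) ((r ^+ 2 * x1) ^+ 2)) x (x0 ^+ 2) (x1 ^+ 2) =
  r ^- (4 * n.+1 + 2) * (1 - (r ^+ 4) ^+ n.+1) ^+ 2
    / ((1 - x0 ^+ 2) * (1 - x1 ^+ 2)) * (Nf r n (x0 ^+ 2) (x1 ^+ 2) * Ssum r n x (x0 ^+ 2) (x1 ^+ 2))).
rewrite !sqp.
eapply (@assemble _ r true true n.+1 n); try eassumption.
- by lia.
- by apply: Nf_pp.
- by case=> [|i]; [apply: coef_pp0 | apply: coef_pp].
- rewrite [r ^+ (4 * n.+1 + 2)]exprD [r ^+ (4 * n.+1)]exprM.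
  have h3 : 1 - q * q ^+ n != 0 by rewrite subr_eq0 eq_sym -qS hq1.
  have h4 : x0 ^+ 2 * x1 ^+ 2 - q ^+ n != 0 by rewrite subr_eq0 hAB.
  rewrite !qS; field.
  side.
Qed.

End LopP.

Section Exp.
Variable F : fieldType.
Variable r : F.
Lemma ie1 : r ^ (2 * 1%Z) = r ^+ 2. Proof. by []. Qed.
Lemma ie2 : r ^ (2 * (-1)%Z) = r ^- 2. Proof. by []. Qed.
Lemma ie3 : r ^ (2 * (2 * 1%Z)) = r ^+ 4. Proof. by []. Qed.
Lemma ie4 : r ^ (2 * (2 * (-1)%Z)) = (r ^+ 4)^-1. Proof. by []. Qed.
Lemma ie5 : r ^ (2 * 0%Z) = 1. Proof. by []. Qed.

Lemma A6_exp (f : fn F) x x0 x1 :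
  A6 r f x x0 x1 =
    Lop r true true (fun y => f y (r ^+ 2 * x0) (r ^+ 2 * x1)) x (x0 ^+ 2) (x1 ^+ 2)
  + Lop r true false (fun y => f y (r ^+ 2 * x0) (r ^- 2 * x1)) x (x0 ^+ 2) (x1 ^+ 2)
  + Lop r false true (fun y => f y (r ^- 2 * x0) (r ^+ 2 * x1)) x (x0 ^+ 2) (x1 ^+ 2)
  + Lop r false false (fun y => f y (r ^- 2 * x0) (r ^- 2 * x1)) x (x0 ^+ 2) (x1 ^+ 2).
Proof.
rewrite /A6 /K0 /G0 /shb /sh !big_cons big_nil /=.
rewrite !ie1 !ie2 !ie3 !ie4 !ie5 !mul1r expr1z exprN1.
rewrite /Lop /kc /gc /=.
ring.
Qed.
End Exp.

Unset Implicit Arguments. Set Strict Implicit.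

Lemma Lop_Pbar (F : fieldType) (r : F) e0 e1 (nu : nat -> F -> F -> F) n (a b x A B : F) :
  Lop r e0 e1 (fun y => Pbar r nu n y a b) x A B = nu n a b * Lop r e0 e1 (fun y => P r n y a b) x A B.
Proof. by rewrite /Lop /Pbar; ring. Qed.

Theorem mainTheorem5 (R : rcfType) (r : R[i])
  (hq : 0 < `|r ^+ 4| < 1)
  (nu : nat -> R[i] -> R[i] -> R[i])
  (hnu : forall (m : nat) (a b : R[i]), nu m a b != 0)
  (n : nat) (hn : (1 <= n)%N)
  (x x0 x1 : R[i])
  (hx : x != 0) (hx2 : x ^+ 2 != 1) (hxr1 : r ^+ 2 * x != 1) (hxr2 : x != r ^+ 2)
  (hx0 : x0 != 0) (hx1 : x1 != 0)
  (hgen0 : forall m : int, x0 ^+ 2 != (r ^+ 4) ^ m)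
  (hgen1 : forall m : int, x1 ^+ 2 != (r ^+ 4) ^ m)
  (hgen01 : forall m : int, x0 ^+ 2 * x1 ^+ 2 != (r ^+ 4) ^ m) :
  A6 r (Pbar r nu n) x x0 x1 =
  ((1 - x0 ^+ 2) * (1 - x1 ^+ 2))^-1 *
  ( nu n (r ^- 2 * x0) (r ^- 2 * x1) / nu n.+1 x0 x1 * r ^- (4 * n + 10)
      * (x0 ^+ 2 * x1 ^+ 2 - (r ^+ 4) ^+ (n + 2)) ^+ 2 * Pbar r nu n.+1 x x0 x1
    - r ^- (4 * n + 6)
      * ( nu n (r ^+ 2 * x0) (r ^- 2 * x1) / nu n x0 x1 * (x1 ^+ 2 - (r ^+ 4) ^+ n.+1) ^+ 2
        + nu n (r ^- 2 * x0) (r ^+ 2 * x1) / nu n x0 x1 * (x0 ^+ 2 - (r ^+ 4) ^+ n.+1) ^+ 2 )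
      * Pbar r nu n x x0 x1
    + nu n (r ^+ 2 * x0) (r ^+ 2 * x1) / nu n.-1 x0 x1 * r ^- (4 * n + 2)
      * (1 - (r ^+ 4) ^+ n) ^+ 2 * Pbar r nu n.-1 x x0 x1 ).
Proof.
case/andP: hq => hq0 hqlt.
have hr4 : r ^+ 4 != 0 by rewrite -normr_gt0.
have hr : r != 0 by apply: contraNneq hr4 => ->; rewrite expr0n.
have hq1 : forall m : nat, (0 < m)%N -> (r ^+ 4) ^+ m != 1.
  move=> m hm; apply/eqP => E.
  have : `|(r ^+ 4) ^+ m| < 1 by rewrite normrX expr_lt1.
  by rewrite E normr1 ltxx.
have hA : forall m : nat, x0 ^+ 2 != (r ^+ 4) ^+ m by move=> m; exact: (hgen0 m).
have hB : forall m : nat, x1 ^+ 2 != (r ^+ 4) ^+ m by move=> m; exact: (hgen1 m).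
have hAB : forall m : nat, x0 ^+ 2 * x1 ^+ 2 != (r ^+ 4) ^+ m by move=> m; exact: (hgen01 m).
have hx2' : 1 - x ^+ 2 != 0 by rewrite subr_eq0 eq_sym.
have hx3 : 1 - r ^+ 2 * x != 0 by rewrite subr_eq0 eq_sym.
have hx4 : x - r ^+ 2 != 0 by rewrite subr_eq0.
have h1A : 1 - x0 ^+ 2 != 0 by rewrite subr_eq0 eq_sym (hA 0%N).
have h1B : 1 - x1 ^+ 2 != 0 by rewrite subr_eq0 eq_sym (hB 0%N).
case: n hn => // n _.
rewrite A6_exp !Lop_Pbar.
rewrite LopP_pp // LopP_pm // LopP_mp // LopP_mm //.
rewrite /Pbar /=.
have h1 := hnu n.+2 x0 x1.
have h2 := hnu n.+1 x0 x1.
have h3 := hnu n x0 x1.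
field.
side.
Qed.
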